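(* Let $(x_n)_{n\ge0}$ be an infinite path in $\Gamma$ with $\ell(x_n)=n$. If $\sum_{n=1}^\infty \frac{1}{\lambda_{x_n}}=\infty$, then $J$ with domain $\mathcal F(\Gamma)$ is essentially selfadjoint in $\ell^2(\Gamma)$.
   Context: Let $\Gamma$ be an infinite connected tree whose vertices are arranged in levels $\ell(x)\in\{0,1,2,\dots\}$: every vertex $x$ is adjacent to exactly one vertex $x'$ with $\ell(x')=\ell(x)+1$; for $\ell(x)\ge 1$ the set $N_x=\{y:\ y'=x\}$ of neighbours of $x$ on level $\ell(x)-1$ is finite and nonempty; $N_x=\emptyset$ if $\ell(x)=0$; there are no other edges. Fix $\lambda_x>0$, $\beta_x\in\mathbb R$. The Jacobi matrix $J$ acts on functions $v:\Gamma\to\mathbb C$ by $(Jv)(x)=\lambda_x v(x')+\beta_x v(x)+\sum_{y\in N_x}\lambda_y v(y)$. $\mathcal F(\Gamma)$ denotes the finitely supported functions; $J$ with domain $\mathcal F(\Gamma)$ is symmetric in $\ell^2(\Gamma)$. *)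

(* Defs.v *)
From Stdlib Require Import Reals List Relations.
Open Scope R_scope.

Definition C : Type := (R * R)%type.
Definition C0 : C := (0, 0).
Definition Cadd (a b : C) : C := (fst a + fst b, snd a + snd b).
Definition Copp (a : C) : C := (- fst a, - snd a).
Definition Csub (a b : C) : C := Cadd a (Copp b).
Definition Cmul (a b : C) : C :=
  (fst a * fst b - snd a * snd b, fst a * snd b + snd a * fst b).
Definition Cconj (a : C) : C := (fst a, - snd a).
Definition Cscal (r : R) (a : C) : C := (r * fst a, r * snd a).
Definition Cnorm2 (a : C) : R := fst a * fst a + snd a * snd a.

Section Sums.
Variable V : Type.

Definition csum (l : list V) (f : V -> C) : C :=
  fold_right (fun x acc => Cadd (f x) acc) C0 l.
Definition rsum (l : list V) (g : V -> R) : R :=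
  fold_right (fun x acc => g x + acc) 0 l.

(** unconditional summation over V: the net of finite partial sums
    (indexed by finite subsets, i.e. duplicate-free lists) converges to c *)
Definition has_sum (f : V -> C) (c : C) : Prop :=
  forall eps, 0 < eps -> exists l0, NoDup l0 /\
    forall l, NoDup l -> incl l0 l -> Cnorm2 (Csub (csum l f) c) < eps.

Definition l2 (u : V -> C) : Prop :=
  exists M, forall l, NoDup l -> rsum l (fun x => Cnorm2 (u x)) <= M.

Definition norm2_le (f : V -> C) (eps : R) : Prop :=
  forall l, NoDup l -> rsum l (fun x => Cnorm2 (f x)) <= eps.

Definition inner (u w : V -> C) (c : C) : Prop :=
  has_sum (fun x => Cmul (u x) (Cconj (w x))) c.

Definition finsupp (v : V -> C) : Prop :=
  exists l, forall x, ~ In x l -> v x = C0.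

(** operators are represented by their graphs *)
Definition graph : Type := (V -> C) -> (V -> C) -> Prop.

Definition closure (G : graph) : graph := fun u w =>
  l2 u /\ l2 w /\
  forall eps, 0 < eps -> exists v z, G v z /\
     norm2_le (fun x => Csub (u x) (v x)) eps /\
     norm2_le (fun x => Csub (w x) (z x)) eps.

Definition adjoint (G : graph) : graph := fun u w =>
  l2 u /\ l2 w /\
  forall v z, G v z -> forall c1 c2, inner z u c1 -> inner v w c2 -> c1 = c2.

Definition selfadjoint (G : graph) : Prop :=
  forall u w, adjoint G u w <-> G u w.

Definition ess_selfadjoint (G : graph) : Prop := selfadjoint (closure G).

End Sums.

Arguments csum {V}. Arguments rsum {V}. Arguments has_sum {V}. Arguments l2 {V}.
Arguments norm2_le {V}. Arguments inner {V}. Arguments finsupp {V}.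
Arguments closure {V}. Arguments adjoint {V}. Arguments selfadjoint {V}.
Arguments ess_selfadjoint {V}.

(** The Jacobi matrix on the tree: x' = parent x, N_x = children x. *)
Definition jacobi {V : Type} (parent : V -> V) (children : V -> list V)
  (lam beta : V -> R) (v : V -> C) (x : V) : C :=
  Cadd (Cadd (Cscal (lam x) (v (parent x))) (Cscal (beta x) (v x)))
       (csum (children x) (fun y => Cscal (lam y) (v y))).

Definition jacobi_graph {V : Type} (parent : V -> V) (children : V -> list V)
  (lam beta : V -> R) : (V -> C) -> (V -> C) -> Prop :=
  fun v w => finsupp v /\ forall x, w x = jacobi parent children lam beta v x.

Definition tree_adj {V : Type} (parent : V -> V) (x y : V) : Prop :=
  parent x = y \/ parent y = x.

(* Main.v *)
Require Import Defs.
From Stdlib Require Import Reals List Relations Lra Lia Psatz Permutation ClassicalEpsilon Arith.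
Import ListNotations.
Open Scope R_scope.

Definition dec {V : Type} (x y : V) : {x = y} + {x <> y} :=
  excluded_middle_informative (x = y).
Definition inb {V : Type} (l : list V) (x : V) : bool :=
  if in_dec dec x l then true else false.
Lemma inb_true {V : Type} (l : list V) x : inb l x = true <-> In x l.
Proof. unfold inb; destruct (in_dec dec x l); split; intros; auto; discriminate. Qed.
Lemma inb_false {V : Type} (l : list V) x : inb l x = false <-> ~ In x l.
Proof. unfold inb; destruct (in_dec dec x l); split; intros; auto; try discriminate; tauto. Qed.

Lemma C_eq (a b : Defs.C) : fst a = fst b -> snd a = snd b -> a = b.
Proof. destruct a, b; simpl; intros; subst; reflexivity. Qed.

Ltac cunf := unfold Cadd, Csub, Copp, Cmul, Cconj, Cscal, C0, Cnorm2 in *.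
Ltac ceq := apply C_eq; cunf; simpl; ring.

Section Sums.
Context {V : Type}.
Implicit Types (l : list V) (f g : V -> Defs.C) (h : V -> R).

Lemma csum_app l1 l2 f : csum (l1 ++ l2) f = Cadd (csum l1 f) (csum l2 f).
Proof. induction l1; simpl. ceq. rewrite IHl1. ceq. Qed.

Lemma csum_ext l f g : (forall x, In x l -> f x = g x) -> csum l f = csum l g.
Proof. induction l; simpl; intros; auto. rewrite H by auto. rewrite IHl by (intros; apply H; auto). auto. Qed.

Lemma csum_zero l f : (forall x, In x l -> f x = C0) -> csum l f = C0.
Proof. induction l; simpl; intros; auto. rewrite H by auto. rewrite IHl by (intros; apply H; auto). ceq. Qed.

Lemma csum_perm l l' f : Permutation l l' -> csum l f = csum l' f.
Proof. induction 1; simpl. reflexivity. rewrite IHPermutation; reflexivity. ceq. congruence. Qed.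

Lemma csum_add l f g : csum l (fun x => Cadd (f x) (g x)) = Cadd (csum l f) (csum l g).
Proof. induction l; simpl. ceq. rewrite IHl. ceq. Qed.

Lemma csum_sub l f g : csum l (fun x => Csub (f x) (g x)) = Csub (csum l f) (csum l g).
Proof. induction l; simpl. ceq. rewrite IHl. ceq. Qed.

Lemma csum_mull l a f : csum l (fun x => Cmul a (f x)) = Cmul a (csum l f).
Proof. induction l; simpl. ceq. rewrite IHl. ceq. Qed.

Lemma csum_scal l r f : csum l (fun x => Cscal r (f x)) = Cscal r (csum l f).
Proof. induction l; simpl. ceq. rewrite IHl. ceq. Qed.

Lemma csum_conj l f : csum l (fun x => Cconj (f x)) = Cconj (csum l f).
Proof. induction l; simpl. ceq. rewrite IHl. ceq. Qed.

Lemma fst_csum l f : fst (csum l f) = rsum l (fun x => fst (f x)).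
Proof. induction l; simpl; auto. rewrite <- IHl. reflexivity. Qed.
Lemma snd_csum l f : snd (csum l f) = rsum l (fun x => snd (f x)).
Proof. induction l; simpl; auto. rewrite <- IHl. reflexivity. Qed.

Lemma csum_exchange (l1 : list V) (l2 : list V) (F : V -> V -> Defs.C) :
  csum l1 (fun x => csum l2 (fun y => F x y)) = csum l2 (fun y => csum l1 (fun x => F x y)).
Proof.
  induction l1; simpl.
  - symmetry; apply csum_zero; auto.
  - rewrite IHl1. rewrite <- csum_add. reflexivity.
Qed.

Lemma csum_filter l f (p : V -> bool) :
  (forall x, In x l -> p x = false -> f x = C0) -> csum l f = csum (filter p l) f.
Proof.
  induction l; simpl; intros; auto.
  destruct (p a) eqn:E; simpl; rewrite IHl; auto.
  rewrite H; auto. ceq.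
Qed.

Lemma csum_indep l1 l2 f : NoDup l1 -> NoDup l2 ->
  (forall x, ~ In x l1 -> f x = C0) -> (forall x, ~ In x l2 -> f x = C0) ->
  csum l1 f = csum l2 f.
Proof.
  intros N1 N2 H1 H2.
  rewrite (csum_filter l1 f (inb l2)).
  2:{ intros x _ E. apply H2. apply inb_false; auto. }
  rewrite (csum_filter l2 f (inb l1)).
  2:{ intros x _ E. apply H1. apply inb_false; auto. }
  apply csum_perm. apply NoDup_Permutation; try apply NoDup_filter; auto.
  intro x; rewrite !filter_In, !inb_true. tauto.
Qed.

Lemma csum_single l f a : NoDup l -> In a l -> (forall x, x <> a -> f x = C0) ->
  csum l f = f a.
Proof.
  intros N Ha H. rewrite (csum_indep l [a] f); auto.
  - simpl. ceq.
  - constructor; auto. constructor.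
  - intros x Hx. apply H. intro; subst; apply Hx; auto.
  - intros x Hx. apply H. intro; subst; apply Hx; left; auto.
Qed.

Lemma csum_single_in l f a : NoDup l -> In a l -> (forall x, In x l -> x <> a -> f x = C0) ->
  csum l f = f a.
Proof.
  intros N Ha H. rewrite (csum_ext l f (fun x => if dec x a then f x else C0)).
  - rewrite (csum_single l _ a); auto.
    + destruct (dec a a); congruence.
    + intros x Hx. destruct (dec x a); congruence.
  - intros x Hx. destruct (dec x a); subst; auto.
Qed.

Lemma rsum_app l1 l2 h : rsum (l1 ++ l2) h = rsum l1 h + rsum l2 h.
Proof. induction l1; simpl. ring. rewrite IHl1. ring. Qed.

Lemma rsum_ext l h h' : (forall x, In x l -> h x = h' x) -> rsum l h = rsum l h'.
Proof. induction l; simpl; intros; auto. rewrite H by auto. rewrite IHl by (intros; apply H; auto). auto. Qed.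

Lemma rsum_le l h h' : (forall x, In x l -> h x <= h' x) -> rsum l h <= rsum l h'.
Proof. induction l; simpl; intros. lra.
  assert (rsum l h <= rsum l h') by (apply IHl; auto). specialize (H a (or_introl eq_refl)). lra. Qed.

Lemma rsum_nonneg l h : (forall x, In x l -> 0 <= h x) -> 0 <= rsum l h.
Proof. induction l; simpl; intros. lra.
  assert (0 <= rsum l h) by (apply IHl; auto). specialize (H a (or_introl eq_refl)). lra. Qed.

Lemma rsum_perm l l' h : Permutation l l' -> rsum l h = rsum l' h.
Proof. induction 1; simpl. reflexivity. rewrite IHPermutation; reflexivity. ring. congruence. Qed.

Lemma rsum_plus l h h' : rsum l (fun x => h x + h' x) = rsum l h + rsum l h'.
Proof. induction l; simpl. ring. rewrite IHl. ring. Qed.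

Lemma rsum_scal l r h : rsum l (fun x => r * h x) = r * rsum l h.
Proof. induction l; simpl. ring. rewrite IHl. ring. Qed.

Lemma rsum_opp l h : rsum l (fun x => - h x) = - rsum l h.
Proof. induction l; simpl. ring. rewrite IHl. ring. Qed.

Lemma rsum_filter l h (p : V -> bool) :
  (forall x, In x l -> p x = false -> h x = 0) -> rsum l h = rsum (filter p l) h.
Proof.
  induction l; simpl; intros; auto.
  destruct (p a) eqn:E; simpl; rewrite IHl; auto.
  rewrite H; auto. ring.
Qed.

Lemma rsum_sublist l1 l2 h : NoDup l1 -> NoDup l2 -> incl l1 l2 ->
  (forall x, 0 <= h x) -> rsum l1 h <= rsum l2 h.
Proof.
  intros N1 N2 I Hp.
  assert (P : Permutation (l1 ++ filter (fun x => negb (inb l1 x)) l2) l2).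
  { apply NoDup_Permutation; auto.
    - apply NoDup_app; auto. apply NoDup_filter; auto.
      intros a Ha Hb. apply filter_In in Hb. destruct Hb as [_ Hb].
      apply Bool.negb_true_iff, inb_false in Hb. tauto.
    - intro x; rewrite in_app_iff, filter_In. split.
      + intros [H|[H _]]; auto.
      + intro H. destruct (inb l1 x) eqn:E.
        * left; apply inb_true; auto.
        * right; split; auto. }
  rewrite <- (rsum_perm _ _ h P), rsum_app.
  assert (0 <= rsum (filter (fun x => negb (inb l1 x)) l2) h) by (apply rsum_nonneg; auto).
  lra.
Qed.

Lemma rsum_supp_le l L h : NoDup l -> NoDup L -> (forall x, 0 <= h x) ->
  (forall x, ~ In x L -> h x = 0) -> rsum l h <= rsum L h.
Proof.
  intros N NL Hp HL.
  rewrite (rsum_filter l h (inb L)).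
  2:{ intros x _ E. apply HL, inb_false; auto. }
  apply rsum_sublist; auto. apply NoDup_filter; auto.
  intros x Hx. apply filter_In in Hx. apply inb_true; tauto.
Qed.

End Sums.
Section Anal.
Context {V : Type}.
Implicit Types (l : list V) (f g : V -> Defs.C) (h : V -> R).

Lemma Cnorm2_nonneg (a : Defs.C) : 0 <= Cnorm2 a.
Proof. unfold Cnorm2. nra. Qed.

Lemma Cnorm2_C0 : Cnorm2 C0 = 0.
Proof. unfold Cnorm2, C0; simpl; ring. Qed.

Lemma has_sum_fin L f : NoDup L -> (forall x, ~ In x L -> f x = C0) -> has_sum f (csum L f).
Proof.
  intros N H eps Heps. exists L. split; auto. intros l Nl I.
  rewrite (csum_indep l L f).
  - replace (Csub (csum L f) (csum L f)) with C0 by ceq. rewrite Cnorm2_C0; auto.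
  - auto.
  - auto.
  - intros x Hx. apply H. intro; apply Hx; auto.
  - auto.
Qed.

Lemma l2_fin (L : list V) f : (forall x, ~ In x L -> f x = C0) -> l2 f.
Proof.
  intros H. exists (rsum (nodup dec L) (fun x => Cnorm2 (f x))). intros l Nl.
  apply rsum_supp_le; auto. apply NoDup_nodup. intros; apply Cnorm2_nonneg.
  intros x Hx. rewrite H. apply Cnorm2_C0. intro; apply Hx; apply nodup_In; auto.
Qed.

Lemma l2_bound f : l2 f -> exists M, 0 <= M /\ forall l, NoDup l -> rsum l (fun x => Cnorm2 (f x)) <= M.
Proof.
  intros [M HM]. exists M; split; auto. specialize (HM nil (NoDup_nil _)). simpl in HM; auto.
Qed.

Lemma pt_bound (a b : Defs.C) t : 0 < t ->
  Rabs (fst (Cmul a (Cconj b))) <= (t * Cnorm2 a + / t * Cnorm2 b) / 2 /\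
  Rabs (snd (Cmul a (Cconj b))) <= (t * Cnorm2 a + / t * Cnorm2 b) / 2.
Proof.
  intros Ht. destruct a as [a1 a2], b as [b1 b2]. cunf; simpl.
  assert (P : forall p q : R, 0 <= t * (p^2 + q^2)).
  { intros. apply Rmult_le_pos; [lra| apply Rplus_le_le_0_compat; apply pow2_ge_0]. }
  split; apply Rabs_le; split.
  - assert (E : t * ((a1 + /t * b1)^2 + (a2 + /t * b2)^2) =
       t * (a1 * a1 + a2 * a2) + / t * (b1 * b1 + b2 * b2) + 2 * (a1 * b1 - a2 * - b2)) by (field; lra).
    specialize (P (a1 + /t * b1) (a2 + /t * b2)). lra.
  - assert (E : t * ((a1 - /t * b1)^2 + (a2 - /t * b2)^2) =
       t * (a1 * a1 + a2 * a2) + / t * (b1 * b1 + b2 * b2) - 2 * (a1 * b1 - a2 * - b2)) by (field; lra).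
    specialize (P (a1 - /t * b1) (a2 - /t * b2)). lra.
  - assert (E : t * ((a1 - /t * b2)^2 + (a2 + /t * b1)^2) =
       t * (a1 * a1 + a2 * a2) + / t * (b1 * b1 + b2 * b2) + 2 * (a1 * - b2 + a2 * b1)) by (field; lra).
    specialize (P (a1 - /t * b2) (a2 + /t * b1)). lra.
  - assert (E : t * ((a1 + /t * b2)^2 + (a2 - /t * b1)^2) =
       t * (a1 * a1 + a2 * a2) + / t * (b1 * b1 + b2 * b2) - 2 * (a1 * - b2 + a2 * b1)) by (field; lra).
    specialize (P (a1 + /t * b2) (a2 - /t * b1)). lra.
Qed.

Lemma Rabs_le_between (x b : R) : Rabs x <= b -> - b <= x <= b.
Proof. unfold Rabs; destruct (Rcase_abs x); intros; lra. Qed.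

Lemma rsum_abs_le l h B : (forall x, In x l -> Rabs (h x) <= B x) -> Rabs (rsum l h) <= rsum l B.
Proof.
  intros H. apply Rabs_le. split.
  - rewrite <- rsum_opp. apply rsum_le. intros x Hx. specialize (H x Hx).
    apply Rabs_le_between in H. lra.
  - apply rsum_le. intros x Hx. specialize (H x Hx). apply Rabs_le_between in H. lra.
Qed.

Lemma bil_bound l a b t : 0 < t ->
  Rabs (rsum l (fun x => fst (Cmul (a x) (Cconj (b x))))) <=
    (t * rsum l (fun x => Cnorm2 (a x)) + / t * rsum l (fun x => Cnorm2 (b x))) / 2 /\
  Rabs (rsum l (fun x => snd (Cmul (a x) (Cconj (b x))))) <=
    (t * rsum l (fun x => Cnorm2 (a x)) + / t * rsum l (fun x => Cnorm2 (b x))) / 2.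
Proof.
  intros Ht.
  assert (E : (t * rsum l (fun x => Cnorm2 (a x)) + / t * rsum l (fun x => Cnorm2 (b x))) / 2
     = rsum l (fun x => (t * Cnorm2 (a x) + / t * Cnorm2 (b x)) / 2)).
  { clear. induction l as [|y l IH]; simpl. unfold Rdiv; ring. rewrite <- IH. unfold Rdiv. ring. }
  rewrite E. split; apply rsum_abs_le; intros; apply pt_bound; auto.
Qed.

Lemma bil_small l a b M eta : 0 < eta -> 0 <= M ->
  ((rsum l (fun x => Cnorm2 (a x)) <= eta * eta / (M + 1) /\ rsum l (fun x => Cnorm2 (b x)) <= M) \/
   (rsum l (fun x => Cnorm2 (b x)) <= eta * eta / (M + 1) /\ rsum l (fun x => Cnorm2 (a x)) <= M)) ->
  Rabs (rsum l (fun x => fst (Cmul (a x) (Cconj (b x))))) <= eta /\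
  Rabs (rsum l (fun x => snd (Cmul (a x) (Cconj (b x))))) <= eta.
Proof.
  intros He HM H.
  set (A := rsum l (fun x => Cnorm2 (a x))) in *.
  set (B := rsum l (fun x => Cnorm2 (b x))) in *.
  assert (HA : 0 <= A) by (apply rsum_nonneg; intros; apply Cnorm2_nonneg).
  assert (HB : 0 <= B) by (apply rsum_nonneg; intros; apply Cnorm2_nonneg).
  assert (Q : 0 < eta / (M + 1)) by (apply Rdiv_lt_0_compat; lra).
  assert (Q2 : eta / (M + 1) * M = eta - eta / (M + 1)) by (field; lra).
  destruct H as [[H1 H2]|[H1 H2]].
  - set (t := (M + 1) / eta).
    assert (Ht : 0 < t) by (unfold t; apply Rdiv_lt_0_compat; lra).
    destruct (bil_bound l a b t Ht) as [B1 B2]. fold A B in B1, B2.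
    assert (It : / t = eta / (M + 1)) by (unfold t; field; lra).
    assert (T1 : t * (eta * eta / (M + 1)) = eta) by (unfold t; field; lra).
    assert (t * A <= eta) by (rewrite <- T1; apply Rmult_le_compat_l; lra).
    assert (/ t * B <= eta) by (rewrite It; apply Rle_trans with (eta / (M+1) * M); [apply Rmult_le_compat_l; lra | lra]).
    split; lra.
  - set (t := eta / (M + 1)).
    assert (Ht : 0 < t) by (unfold t; apply Rdiv_lt_0_compat; lra).
    destruct (bil_bound l a b t Ht) as [B1 B2]. fold A B in B1, B2.
    assert (T1 : / t * (eta * eta / (M + 1)) = eta) by (unfold t; field; lra).
    assert (/ t * B <= eta) by (rewrite <- T1; apply Rmult_le_compat_l; [left; apply Rinv_0_lt_compat; lra | lra]).
    assert (t * A <= eta) by (apply Rle_trans with (eta / (M+1) * M); [apply Rmult_le_compat_l; lra | lra]).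
    split; lra.
Qed.

End Anal.
Section Tree.
Variable V : Type.
Variable level : V -> nat.
Variable parent : V -> V.
Variable children : V -> list V.
Variable lam beta : V -> R.
Hypothesis Hlev : forall x, level (parent x) = S (level x).
Hypothesis Hch : forall x y, In y (children x) <-> parent y = x.
Hypothesis Hnodup : forall x, NoDup (children x).
Hypothesis Hlam : forall x, 0 < lam x.

Notation jac := (jacobi parent children lam beta).
Notation Gr := (jacobi_graph parent children lam beta).

Definition K (x y : V) : R :=
  (if dec y (parent x) then lam x else 0) + (if dec x y then beta x else 0) +
  (if dec x (parent y) then lam y else 0).

Lemma K_sym x y : K x y = K y x.
Proof.
  unfold K. destruct (dec y (parent x)), (dec x y), (dec x (parent y)),
    (dec x (parent y)), (dec y x), (dec y (parent x)); subst; try congruence; ring.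
Qed.

Definition L0 (x : V) := nodup dec (x :: parent x :: children x).

Lemma K_zero x y : ~ In y (L0 x) -> K x y = 0.
Proof.
  intro H. unfold L0 in H. rewrite nodup_In in H. unfold K.
  destruct (dec y (parent x)). { exfalso; apply H; subst; simpl; auto. }
  destruct (dec x y). { exfalso; apply H; subst; simpl; auto. }
  destruct (dec x (parent y)). { exfalso; apply H; simpl; right; right; apply Hch; auto. }
  ring.
Qed.

Lemma Cscal_0 a : Cscal 0 a = C0.
Proof. ceq. Qed.
Lemma Cscal_C0 r : Cscal r C0 = C0.
Proof. ceq. Qed.

Lemma jac_K v x : jac v x = csum (L0 x) (fun y => Cscal (K x y) (v y)).
Proof.
  assert (N : NoDup (L0 x)) by apply NoDup_nodup.
  unfold K.
  rewrite (csum_ext _ _ (fun y => Cadd (Cadd (Cscal (if dec y (parent x) then lam x else 0) (v y))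
     (Cscal (if dec x y then beta x else 0) (v y))) (Cscal (if dec x (parent y) then lam y else 0) (v y))))
    by (intros; ceq).
  rewrite !csum_add. unfold jacobi. f_equal; [f_equal|].
  - rewrite (csum_single _ _ (parent x)); auto.
    + destruct (dec (parent x) (parent x)); [reflexivity| congruence].
    + unfold L0; apply nodup_In; simpl; auto.
    + intros y Hy. destruct (dec y (parent x)); [congruence| apply Cscal_0].
  - rewrite (csum_single _ _ x); auto.
    + destruct (dec x x); [reflexivity| congruence].
    + unfold L0; apply nodup_In; simpl; auto.
    + intros y Hy. destruct (dec x y); [congruence| apply Cscal_0].
  - rewrite (csum_indep (L0 x) (children x)); auto.
    + apply csum_ext. intros y Hy. apply Hch in Hy.
      destruct (dec x (parent y)); [reflexivity| congruence].
    + intros y Hy. destruct (dec x (parent y)); [|apply Cscal_0].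
      exfalso; apply Hy. unfold L0; apply nodup_In; simpl; right; right; apply Hch; auto.
    + intros y Hy. destruct (dec x (parent y)); [|apply Cscal_0].
      exfalso; apply Hy. apply Hch; auto.
Qed.

Lemma jac_K_gen v x L : NoDup L -> (forall y, ~ In y L -> v y = C0) ->
  jac v x = csum L (fun y => Cscal (K x y) (v y)).
Proof.
  intros N H. rewrite jac_K. apply csum_indep; auto.
  - apply NoDup_nodup.
  - intros y Hy. rewrite K_zero; auto. apply Cscal_0.
  - intros y Hy. rewrite H; auto. apply Cscal_C0.
Qed.

Lemma jac_finsupp v : finsupp v -> finsupp (jac v).
Proof.
  intros [L HL]. exists (L ++ map parent L ++ flat_map children L).
  intros x Hx. rewrite jac_K. apply csum_zero. intros y _.
  destruct (in_dec dec y L) as [Iy|Iy]; [|rewrite HL; auto; apply Cscal_C0].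
  replace (K x y) with 0; [apply Cscal_0|]. unfold K.
  destruct (dec y (parent x)).
  { exfalso; apply Hx. rewrite !in_app_iff, in_flat_map. right; right. exists y; split; auto.
    apply Hch; auto. }
  destruct (dec x y). { exfalso; apply Hx; subst; apply in_app_iff; auto. }
  destruct (dec x (parent y)).
  { exfalso; apply Hx. rewrite !in_app_iff, in_map_iff. right; left. exists y; auto. }
  ring.
Qed.

Lemma Csub_diag a : Csub a a = C0.
Proof. ceq. Qed.

Lemma norm2_le_zero (f : V -> Defs.C) eps : 0 < eps -> norm2_le (fun x => Csub (f x) (f x)) eps.
Proof.
  intros He l _. rewrite (rsum_ext _ _ (fun _ => 0)).
  - assert (rsum l (fun _ : V => 0) = 0) by (clear; induction l; simpl; lra). lra.
  - intros. rewrite Csub_diag, Cnorm2_C0. auto.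
Qed.

Lemma G_closure v : finsupp v -> closure Gr v (jac v).
Proof.
  intros Hv. pose proof (jac_finsupp v Hv) as Hz.
  destruct Hv as [L HL], Hz as [L' HL'].
  split; [apply (l2_fin L); auto|]. split; [apply (l2_fin L'); auto|].
  intros eps He. exists v, (jac v). split.
  - split; [exists L; auto| auto].
  - split; apply norm2_le_zero; auto.
Qed.

Lemma adj_pointwise u w : adjoint (closure Gr) u w -> forall y, w y = jac u y.
Proof.
  intros [Hu [Hw H]] y.
  set (d := fun x => if dec x y then ((1, 0) : Defs.C) else C0).
  assert (Hd : forall x, ~ In x [y] -> d x = C0).
  { intros x Hx. unfold d. destruct (dec x y); auto. subst; exfalso; apply Hx; simpl; auto. }
  assert (Jd : forall x, jac d x = Cscal (K y x) (1, 0)).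
  { intro x. rewrite (jac_K_gen d x [y]); [| repeat constructor; auto | auto].
    simpl. unfold d. destruct (dec y y); [|congruence]. rewrite K_sym. ceq. }
  assert (Cl : closure Gr d (jac d)) by (apply G_closure; exists [y]; auto).
  specialize (H d (jac d) Cl).
  specialize (H (csum (L0 y) (fun x => Cmul (jac d x) (Cconj (u x))))
     (csum [y] (fun x => Cmul (d x) (Cconj (w x))))).
  assert (E : csum (L0 y) (fun x => Cmul (jac d x) (Cconj (u x))) =
              csum [y] (fun x => Cmul (d x) (Cconj (w x)))).
  { apply H.
    - apply has_sum_fin. apply NoDup_nodup. intros x Hx. rewrite Jd.
      rewrite K_zero; auto. ceq.
    - apply has_sum_fin. repeat constructor; auto. intros x Hx. rewrite Hd; auto. ceq. }
  rewrite (csum_ext _ _ (fun x => Cconj (Cscal (K y x) (u x)))) in E by (intros; rewrite Jd; ceq).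
  rewrite csum_conj, <- jac_K in E. simpl in E. unfold d in E.
  destruct (dec y y); [|congruence].
  destruct (jac u y) as [p q], (w y) as [p' q']. cunf. simpl in E. injection E. intros.
  f_equal; lra.
Qed.


Lemma csum_mulr (l : list V) f c : Cmul (csum l f) c = csum l (fun y => Cmul (f y) c).
Proof. induction l; simpl. ceq. rewrite <- IHl. ceq. Qed.

Lemma jac_sym l a b : NoDup l -> (forall y, ~ In y l -> a y = C0) -> (forall y, ~ In y l -> b y = C0) ->
  csum l (fun x => Cmul (jac a x) (Cconj (b x))) = csum l (fun x => Cmul (a x) (Cconj (jac b x))).
Proof.
  intros N Ha Hb.
  rewrite (csum_ext _ _ (fun x => csum l (fun y => Cmul (Cscal (K x y) (a y)) (Cconj (b x))))).
  2:{ intros x _. rewrite (jac_K_gen a x l); auto. apply csum_mulr. }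
  rewrite (csum_ext _ (fun x => Cmul (a x) (Cconj (jac b x)))
              (fun x => csum l (fun y => Cmul (a x) (Cconj (Cscal (K x y) (b y)))))).
  2:{ intros x _. rewrite (jac_K_gen b x l); auto. rewrite <- csum_conj, <- csum_mull. reflexivity. }
  rewrite csum_exchange. apply csum_ext; intros x _. apply csum_ext; intros y _.
  rewrite K_sym. ceq.
Qed.

Definition pr (b : bool) (c : Defs.C) : R := if b then fst c else snd c.

Lemma pr_csum bb (l : list V) (f : V -> Defs.C) : pr bb (csum l f) = rsum l (fun x => pr bb (f x)).
Proof. destruct bb; simpl; [apply fst_csum| apply snd_csum]. Qed.

Lemma pr_sub bb a c : pr bb (Csub a c) = pr bb a - pr bb c.
Proof. destruct bb; cunf; simpl; ring. Qed.

Lemma sq_lt (x e : R) : 0 < e -> x * x < e * e -> - e < x < e.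
Proof.
  intros He H. split.
  - destruct (Rlt_or_le (-e) x); auto. exfalso.
    assert (e * e <= (- x) * (- x)) by (apply Rmult_le_compat; lra). lra.
  - destruct (Rlt_or_le x e); auto. exfalso.
    assert (e * e <= x * x) by (apply Rmult_le_compat; lra). lra.
Qed.

Lemma pr_close bb a c eta : 0 < eta -> Cnorm2 (Csub a c) < eta * eta -> Rabs (pr bb a - pr bb c) < eta.
Proof.
  intros He H. destruct a as [a1 a2], c as [c1 c2]. cunf. simpl in *.
  assert (P1 : 0 <= (a1 + - c1) * (a1 + - c1)) by apply Rle_0_sqr.
  assert (P2 : 0 <= (a2 + - c2) * (a2 + - c2)) by apply Rle_0_sqr.
  replace (a1 + - c1) with (a1 - c1) in * by ring.
  replace (a2 + - c2) with (a2 - c2) in * by ring.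
  assert (Q1 : (a1 - c1) * (a1 - c1) < eta * eta) by lra.
  assert (Q2 : (a2 - c2) * (a2 - c2) < eta * eta) by lra.
  apply sq_lt in Q1; auto. apply sq_lt in Q2; auto.
  destruct bb; simpl; apply Rabs_def1; lra.
Qed.

Lemma Cnorm2_sub_sym a c : Cnorm2 (Csub a c) = Cnorm2 (Csub c a).
Proof. cunf; simpl; ring. Qed.

Lemma Cnorm2_tri a c : Cnorm2 c <= 2 * Cnorm2 a + 2 * Cnorm2 (Csub a c).
Proof. destruct a as [a1 a2], c as [c1 c2]; cunf; simpl.
  assert (P1 : 0 <= (2*a1 - c1) * (2*a1 - c1)) by apply Rle_0_sqr.
  assert (P2 : 0 <= (2*a2 - c2) * (2*a2 - c2)) by apply Rle_0_sqr.
  assert (E : 2 * (a1 * a1 + a2 * a2) + 2 * ((a1 + - c1) * (a1 + - c1) + (a2 + - c2) * (a2 + - c2))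
     - (c1 * c1 + c2 * c2) = (2*a1 - c1) * (2*a1 - c1) + (2*a2 - c2) * (2*a2 - c2)) by ring.
  lra. Qed.

Lemma bil_pr bb (l : list V) (a b : V -> Defs.C) M eta : 0 < eta -> 0 <= M ->
  ((rsum l (fun x => Cnorm2 (a x)) <= eta * eta / (M + 1) /\ rsum l (fun x => Cnorm2 (b x)) <= M) \/
   (rsum l (fun x => Cnorm2 (b x)) <= eta * eta / (M + 1) /\ rsum l (fun x => Cnorm2 (a x)) <= M)) ->
  Rabs (rsum l (fun x => pr bb (Cmul (a x) (Cconj (b x))))) <= eta.
Proof. intros. destruct (bil_small l a b M eta); auto. destruct bb; auto. Qed.

Lemma R_eq_small (a b : R) : (forall eta, 0 < eta -> Rabs (a - b) <= 6 * eta) -> a = b.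
Proof.
  intros H. destruct (Req_dec a b) as [|Hn]; auto. exfalso.
  assert (P : 0 < Rabs (a - b)) by (apply Rabs_pos_lt; lra).
  specialize (H (Rabs (a - b) / 12) ltac:(lra)). lra.
Qed.

Lemma closure_sym u w : closure Gr u w -> adjoint (closure Gr) u w.
Proof.
  intros Hc. pose proof Hc as [Hu [Hw Happ]]. split; auto. split; auto.
  intros v z [Hv [Hz Happ2]] c1 c2 I1 I2.
  destruct (l2_bound u Hu) as [Bu [Bu0 HBu]].
  destruct (l2_bound w Hw) as [Bw [Bw0 HBw]].
  destruct (l2_bound v Hv) as [Bv [Bv0 HBv]].
  destruct (l2_bound z Hz) as [Bz [Bz0 HBz]].
  assert (Main : forall bb eta, 0 < eta -> Rabs (pr bb c1 - pr bb c2) <= 6 * eta).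
  { intros bb eta He.
    set (M := Bu + Bv + 2 * Bz + 2 * Bw + 2).
    assert (HM : 0 <= M) by (unfold M; lra).
    set (eps := Rmin 1 (eta * eta / (M + 1))).
    assert (Hq : 0 < eta * eta / (M + 1)) by (apply Rdiv_lt_0_compat; nra).
    assert (He1 : 0 < eps) by (unfold eps; apply Rmin_glb_lt; lra).
    assert (He2 : eps <= 1) by apply Rmin_l.
    assert (He3 : eps <= eta * eta / (M + 1)) by apply Rmin_r.
    destruct (Happ eps He1) as (v1 & z1 & [Fv1 Ez1] & N1 & N2).
    destruct (Happ2 eps He1) as (v2 & z2 & [Fv2 Ez2] & N3 & N4).
    destruct (I1 (eta * eta) ltac:(nra)) as (l01 & _ & S1).
    destruct (I2 (eta * eta) ltac:(nra)) as (l02 & _ & S2).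
    destruct Fv1 as [Lv1 HLv1], Fv2 as [Lv2 HLv2].
    set (l := nodup dec (l01 ++ l02 ++ Lv1 ++ Lv2)).
    assert (Nl : NoDup l) by apply NoDup_nodup.
    assert (Il : forall x, In x (l01 ++ l02 ++ Lv1 ++ Lv2) -> In x l) by (intros; apply nodup_In; auto).
    specialize (S1 l Nl ltac:(intros x Hx; apply Il; rewrite !in_app_iff; auto)).
    specialize (S2 l Nl ltac:(intros x Hx; apply Il; rewrite !in_app_iff; auto)).
    apply (pr_close bb) in S1; auto. apply (pr_close bb) in S2; auto.
    rewrite pr_csum in S1, S2.
    assert (Sym : csum l (fun x => Cmul (z2 x) (Cconj (v1 x))) = csum l (fun x => Cmul (v2 x) (Cconj (z1 x)))).
    { rewrite (csum_ext _ _ (fun x => Cmul (jac v2 x) (Cconj (v1 x)))) by (intros; rewrite Ez2; auto).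
      rewrite (csum_ext _ (fun x => Cmul (v2 x) (Cconj (z1 x))) (fun x => Cmul (v2 x) (Cconj (jac v1 x))))
        by (intros; rewrite Ez1; auto).
      apply jac_sym; auto.
      - intros y Hy; apply HLv2; intro; apply Hy; apply Il; rewrite !in_app_iff; auto.
      - intros y Hy; apply HLv1; intro; apply Hy; apply Il; rewrite !in_app_iff; auto. }
    apply (f_equal (pr bb)) in Sym. rewrite !pr_csum in Sym.
    assert (D1 : rsum l (fun x => pr bb (Cmul (z x) (Cconj (u x)))) - rsum l (fun x => pr bb (Cmul (z2 x) (Cconj (v1 x))))
       = rsum l (fun x => pr bb (Cmul (Csub (z x) (z2 x)) (Cconj (u x)))) +
         rsum l (fun x => pr bb (Cmul (z2 x) (Cconj (Csub (u x) (v1 x)))))).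
    { rewrite <- rsum_plus. unfold Rminus. rewrite <- rsum_opp, <- rsum_plus. apply rsum_ext; intros.
      destruct bb; cunf; simpl; ring. }
    assert (D2 : rsum l (fun x => pr bb (Cmul (v2 x) (Cconj (z1 x)))) - rsum l (fun x => pr bb (Cmul (v x) (Cconj (w x))))
       = rsum l (fun x => pr bb (Cmul (Csub (v2 x) (v x)) (Cconj (z1 x)))) +
         rsum l (fun x => pr bb (Cmul (v x) (Cconj (Csub (z1 x) (w x)))))).
    { rewrite <- rsum_plus. unfold Rminus. rewrite <- rsum_opp, <- rsum_plus. apply rsum_ext; intros.
      destruct bb; cunf; simpl; ring. }
    assert (T1 : Rabs (rsum l (fun x => pr bb (Cmul (Csub (z x) (z2 x)) (Cconj (u x))))) <= eta).
    { apply (bil_pr bb l _ _ M eta); auto. left. split.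
      - specialize (N4 l Nl). simpl in N4. lra.
      - specialize (HBu l Nl). unfold M; lra. }
    assert (T2 : Rabs (rsum l (fun x => pr bb (Cmul (z2 x) (Cconj (Csub (u x) (v1 x)))))) <= eta).
    { apply (bil_pr bb l _ _ M eta); auto. right. split.
      - specialize (N1 l Nl). simpl in N1. lra.
      - apply Rle_trans with (2 * rsum l (fun x => Cnorm2 (z x)) + 2 * rsum l (fun x => Cnorm2 (Csub (z x) (z2 x)))).
        + rewrite <- !rsum_scal, <- rsum_plus. apply rsum_le; intros; apply Cnorm2_tri.
        + specialize (N4 l Nl). specialize (HBz l Nl). unfold M; lra. }
    assert (T3 : Rabs (rsum l (fun x => pr bb (Cmul (Csub (v2 x) (v x)) (Cconj (z1 x))))) <= eta).
    { apply (bil_pr bb l _ _ M eta); auto. left. split.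
      - specialize (N3 l Nl). simpl in N3.
        rewrite (rsum_ext _ _ (fun x => Cnorm2 (Csub (v x) (v2 x)))) by (intros; apply Cnorm2_sub_sym). lra.
      - apply Rle_trans with (2 * rsum l (fun x => Cnorm2 (w x)) + 2 * rsum l (fun x => Cnorm2 (Csub (w x) (z1 x)))).
        + rewrite <- !rsum_scal, <- rsum_plus. apply rsum_le; intros; apply Cnorm2_tri.
        + specialize (N2 l Nl). specialize (HBw l Nl). unfold M; lra. }
    assert (T4 : Rabs (rsum l (fun x => pr bb (Cmul (v x) (Cconj (Csub (z1 x) (w x)))))) <= eta).
    { apply (bil_pr bb l _ _ M eta); auto. right. split.
      - specialize (N2 l Nl). simpl in N2.
        rewrite (rsum_ext _ _ (fun x => Cnorm2 (Csub (w x) (z1 x)))) by (intros; apply Cnorm2_sub_sym). lra.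
      - specialize (HBv l Nl). unfold M; lra. }
    apply Rabs_le_between in T1, T2, T3, T4.
    apply Rabs_def2 in S1. apply Rabs_def2 in S2.
    apply Rabs_le. lra. }
  apply C_eq.
  - apply R_eq_small; intros; apply (Main true); auto.
  - apply R_eq_small; intros; apply (Main false); auto.
Qed.

Hypothesis Hconn : forall x y, clos_refl_trans V (tree_adj parent) x y.
Variable xs : nat -> V.
Hypothesis Hxlev : forall n, level (xs n) = n.
Hypothesis Hxpath : forall n, parent (xs n) = xs (S n).

Definition desc (m : nat) (x : V) : Prop := exists k, Nat.iter k parent x = xs m.
Definition ind (m : nat) (x : V) : R := if excluded_middle_informative (desc m x) then 1 else 0.

Lemma level_iter k x : level (Nat.iter k parent x) = (level x + k)%nat.
Proof. induction k; simpl. lia. rewrite Hlev, IHk. lia. Qed.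

Lemma desc_level m x : desc m x -> (level x <= m)%nat.
Proof. intros [k Hk]. pose proof (level_iter k x). rewrite Hk, Hxlev in H. lia. Qed.

Lemma desc_xs m : desc m (xs m).
Proof. exists 0%nat. reflexivity. Qed.

Lemma desc_succ m x : desc m x -> desc (S m) x.
Proof. intros [k Hk]. exists (S k). simpl. rewrite Hk. auto. Qed.

Lemma desc_le m m' x : (m <= m')%nat -> desc m x -> desc m' x.
Proof. induction 1; auto. intros; apply desc_succ; auto. Qed.

Lemma xs_inj a b : xs a = xs b -> a = b.
Proof. intro H. rewrite <- (Hxlev a), <- (Hxlev b), H. auto. Qed.

Lemma desc_xs_iff m k : desc m (xs k) <-> (k <= m)%nat.
Proof. split; intros. apply desc_level in H. rewrite Hxlev in H; auto.
  apply (desc_le k); auto. apply desc_xs. Qed.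

Lemma desc_child m y : desc m (parent y) -> desc m y.
Proof. intros [k Hk]. exists (S k). rewrite Nat.iter_succ_r. auto. Qed.

Lemma desc_parent m x : desc m x -> x <> xs m -> desc m (parent x).
Proof. intros [k Hk] Hn. destruct k. simpl in Hk; congruence.
  exists k. rewrite <- Nat.iter_succ_r. auto. Qed.

Lemma desc_parent_iff m x : x <> xs m -> (desc m (parent x) <-> desc m x).
Proof. intros Hn; split; [apply desc_child| intros; apply desc_parent; auto]. Qed.

Lemma desc_ex x : exists m, desc m x.
Proof.
  assert (G : forall a b, clos_refl_trans V (tree_adj parent) a b -> (exists m, desc m a) -> exists m, desc m b).
  { induction 1; auto. intros [m Hm]. destruct H as [H|H].
    - exists (S m). subst y. apply desc_parent. apply desc_succ; auto.
      intro E. apply desc_level in Hm. rewrite E, Hxlev in Hm. lia.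
    - exists m. apply desc_child. rewrite H; auto. }
  apply (G (xs 0%nat)); auto. exists 0%nat; apply desc_xs.
Qed.

Fixpoint sub (x : V) (n : nat) : list V :=
  match n with
  | O => [x]
  | S n' => x :: flat_map (fun c => sub c n') (children x)
  end.

Lemma in_sub k x : forall y n, Nat.iter k parent x = y -> (k <= n)%nat -> In x (sub y n).
Proof.
  induction k; intros y n Hk Hn.
  - simpl in Hk. subst. destruct n; simpl; auto.
  - destruct n; [lia|]. simpl. right. apply in_flat_map.
    exists (Nat.iter k parent x). split.
    + apply Hch. simpl in Hk. auto.
    + apply IHk; auto. lia.
Qed.

Lemma desc_in_sub m x : desc m x -> In x (sub (xs m) m).
Proof.
  intros [k Hk]. apply (in_sub k); auto. pose proof (level_iter k x). rewrite Hk, Hxlev in H. lia.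
Qed.

Lemma ind_one m x : desc m x -> ind m x = 1.
Proof. unfold ind; destruct (excluded_middle_informative (desc m x)); tauto. Qed.
Lemma ind_zero m x : ~ desc m x -> ind m x = 0.
Proof. unfold ind; destruct (excluded_middle_informative (desc m x)); tauto. Qed.
Lemma ind_range m x : 0 <= ind m x <= 1.
Proof. unfold ind; destruct (excluded_middle_informative (desc m x)); lra. Qed.

Lemma desc_list (l : list V) : exists M, forall x, In x l -> desc M x.
Proof.
  induction l as [|a l [M HM]]. exists 0%nat; simpl; tauto.
  destruct (desc_ex a) as [m Hm]. exists (Nat.max m M). intros x [E|Hx].
  - subst. apply (desc_le m); auto; lia.
  - apply (desc_le M); auto; lia.
Qed.

Lemma tail (h : V -> R) B : (forall x, 0 <= h x) -> (forall l, NoDup l -> rsum l h <= B) ->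
  forall eps, 0 < eps -> exists M, forall l, NoDup l -> rsum l (fun x => (1 - ind M x) * h x) <= eps.
Proof.
  intros Hp HB eps He.
  set (E := fun r => exists l, NoDup l /\ r = rsum l h).
  destruct (completeness E) as [S [HS1 HS2]].
  { exists B. intros r [l [Nl ->]]. auto. }
  { exists 0. exists nil. split; [constructor| reflexivity]. }
  destruct (classic (exists l, NoDup l /\ S - eps < rsum l h)) as [[l0 [N0 H0]]|Hn].
  2:{ exfalso. assert (S <= S - eps); [|lra]. apply HS2. intros r [l [Nl ->]].
      destruct (Rle_or_lt (rsum l h) (S - eps)); auto. exfalso; apply Hn; eauto. }
  destruct (desc_list l0) as [M HM]. exists M. intros l Nl.
  set (l' := filter (fun x => negb (inb l0 x)) l).
  assert (Nl' : NoDup l') by (apply NoDup_filter; auto).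
  rewrite (rsum_filter l _ (fun x => negb (inb l0 x))).
  2:{ intros x _ Hx. apply Bool.negb_false_iff, inb_true in Hx. rewrite ind_one; auto. ring. }
  fold l'.
  assert (A : rsum l' (fun x => (1 - ind M x) * h x) <= rsum l' h).
  { apply rsum_le. intros x _. pose proof (ind_range M x). pose proof (Hp x).
    assert (ind M x * h x >= 0) by (apply Rle_ge, Rmult_le_pos; lra). lra. }
  assert (Bd : rsum (l' ++ l0) h <= S).
  { apply HS1. exists (l' ++ l0). split; auto. apply NoDup_app; auto.
    intros a Ha Hb. unfold l' in Ha. apply filter_In in Ha. destruct Ha as [_ Ha].
    apply Bool.negb_true_iff, inb_false in Ha. tauto. }
  rewrite rsum_app in Bd. lra.
Qed.
Lemma rsum_path (g : V -> R) n : rsum (map xs (seq 0 (S n))) g = sum_f_R0 (fun k => g (xs k)) n.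
Proof.
  induction n. simpl. ring.
  rewrite seq_S, map_app, rsum_app, IHn. simpl. ring.
Qed.

Lemma NoDup_path n : NoDup (map xs (seq 0 n)).
Proof. apply FinFun.Injective_map_NoDup. intros a b; apply xs_inj. apply seq_NoDup. Qed.

Lemma path_bound u : l2 u -> exists B, 0 <= B /\ forall n, sum_f_R0 (fun k => Cnorm2 (u (xs k))) n <= B.
Proof.
  intros Hu. destruct (l2_bound u Hu) as [B [B0 HB]]. exists B; split; auto.
  intro n. rewrite <- (rsum_path (fun x => Cnorm2 (u x))). apply HB, NoDup_path.
Qed.

Lemma path_supp (g : V -> R) K l : (forall x, 0 <= g x) ->
  (forall x, (forall k, (k <= K)%nat -> x <> xs k) -> g x = 0) -> NoDup l ->
  rsum l g <= sum_f_R0 (fun k => g (xs k)) K.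
Proof.
  intros Hp Hz Nl. rewrite <- rsum_path. apply rsum_supp_le; auto. apply NoDup_path.
  intros x Hx. apply Hz. intros k Hk E. apply Hx. subst. apply in_map, in_seq. lia.
Qed.

Lemma sum_shift (f : nat -> R) n : sum_f_R0 f (S n) = f 0%nat + sum_f_R0 (fun k => f (S k)) n.
Proof.
  induction n. simpl. ring.
  change (sum_f_R0 f (S (S n))) with (sum_f_R0 f (S n) + f (S (S n))).
  rewrite IHn. simpl. ring.
Qed.

Lemma sum_nonneg (f : nat -> R) n : (forall k, 0 <= f k) -> 0 <= sum_f_R0 f n.
Proof. intros H. induction n; simpl. auto. specialize (H (S n)). lra. Qed.

Lemma sum_zero (f : nat -> R) n : (forall k, (k <= n)%nat -> f k = 0) -> sum_f_R0 f n = 0.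
Proof. intros H. induction n; simpl. apply H; lia. rewrite IHn, H; auto; lra. Qed.

Lemma sum_delta (f : nat -> R) k n :
  sum_f_R0 (fun m => if Nat.eq_dec m k then f m else 0) n = if le_dec k n then f k else 0.
Proof.
  induction n; cbn [sum_f_R0].
  - destruct (Nat.eq_dec 0 k), (le_dec k 0); subst; auto; lia.
  - rewrite IHn. destruct (Nat.eq_dec (S n) k), (le_dec k n), (le_dec k (S n)); subst; try lia; ring.
Qed.

Lemma ind_xs m k : ind m (xs k) = if le_dec k m then 1 else 0.
Proof.
  pose proof (desc_xs_iff m k). destruct (le_dec k m).
  - apply ind_one; tauto.
  - apply ind_zero; tauto.
Qed.

Section Cut.
Variables (M N : nat) (c : R).
Hypothesis Hc : 0 <= c.

Definition dd (m : nat) : R :=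
  if andb (Nat.ltb (S M) m) (Nat.leb m (S N)) then c / lam (xs m) else 0.
Definition phi (x : V) : R := sum_f_R0 (fun m => dd m * ind m x) (S N).

Lemma dd_lam m : 0 <= lam (xs m) * dd m <= c.
Proof.
  unfold dd. destruct (andb _ _). 2: lra.
  pose proof (Hlam (xs m)). replace (lam (xs m) * (c / lam (xs m))) with c by (field; lra). lra.
Qed.

Lemma dd_nonneg m : 0 <= dd m.
Proof.
  unfold dd. destruct (andb _ _). 2: lra. pose proof (Hlam (xs m)).
  apply Rmult_le_pos; auto. left; apply Rinv_0_lt_compat; auto.
Qed.

Lemma dd_big m : (S N < m)%nat -> dd m = 0.
Proof.
  intros H. unfold dd. destruct (Nat.leb m (S N)) eqn:E. apply Nat.leb_le in E; lia.
  rewrite Bool.andb_false_r. auto.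
Qed.

Definition ssum (n : nat) := sum_f_R0 (fun k => / lam (xs (S k))) n.

Lemma dd_total : (M <= N)%nat -> sum_f_R0 dd (S N) = c * (ssum N - ssum M).
Proof.
  intros HMN. rewrite sum_shift.
  assert (D0 : dd 0 = 0) by (unfold dd; simpl; auto). rewrite D0, Rplus_0_l.
  assert (G : forall d, (M + d <= N)%nat -> sum_f_R0 (fun k => dd (S k)) (M + d) = c * (ssum (M + d) - ssum M)).
  { induction d; intros Hd.
    - rewrite Nat.add_0_r. rewrite sum_zero. ring. intros k Hk. unfold dd.
      destruct (Nat.ltb (S M) (S k)) eqn:E; auto. apply Nat.ltb_lt in E; lia.
    - replace (M + S d)%nat with (S (M + d)) by lia.
      change (sum_f_R0 (fun k => dd (S k)) (S (M + d))) with
        (sum_f_R0 (fun k => dd (S k)) (M + d) + dd (S (S (M + d)))).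
      rewrite IHd by lia. unfold ssum. simpl. fold (ssum (M + d)).
      unfold dd. replace (andb (Nat.ltb (S M) (S (S (M + d)))) (Nat.leb (S (S (M + d))) (S N))) with true.
      + unfold Rdiv. ring.
      + symmetry. apply Bool.andb_true_iff. split; [apply Nat.ltb_lt| apply Nat.leb_le]; lia. }
  specialize (G (N - M)%nat ltac:(lia)). replace (M + (N - M))%nat with N in G by lia. exact G.
Qed.

Lemma phi_one x : desc M x -> phi x = sum_f_R0 dd (S N).
Proof.
  intros H. apply sum_eq. intros m Hm. unfold dd.
  destruct (Nat.ltb (S M) m) eqn:E; simpl; [|ring].
  apply Nat.ltb_lt in E. rewrite ind_one. destruct (Nat.leb m (S N)); ring.
  apply (desc_le M); auto; lia.
Qed.

Lemma phi_range x : sum_f_R0 dd (S N) = 1 -> 0 <= phi x <= 1.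
Proof.
  intros T. split.
  - apply sum_nonneg. intros; apply Rmult_le_pos; [apply dd_nonneg| apply ind_range].
  - rewrite <- T. apply sum_Rle. intros m _. pose proof (dd_nonneg m). pose proof (ind_range m x).
    assert (dd m * ind m x <= dd m * 1) by (apply Rmult_le_compat_l; lra). lra.
Qed.

Lemma phi_zero x : ~ desc (S N) x -> phi x = 0.
Proof.
  intros H. apply sum_zero. intros m Hm. rewrite ind_zero. ring.
  intro D; apply H; apply (desc_le m); auto.
Qed.

Lemma phi_parent x : (forall k, x <> xs k) -> phi (parent x) = phi x.
Proof.
  intros H. apply sum_eq. intros m _. f_equal. unfold ind.
  pose proof (desc_parent_iff m x (H m)).
  destruct (excluded_middle_informative (desc m (parent x))), (excluded_middle_informative (desc m x)); tauto.
Qed.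

Lemma phi_step k : phi (xs k) - phi (xs (S k)) = dd k.
Proof.
  unfold phi. rewrite <- minus_sum.
  rewrite (sum_eq _ (fun m => if Nat.eq_dec m k then dd m else 0)).
  - rewrite sum_delta. destruct (le_dec k (S N)); auto. rewrite dd_big; auto; lia.
  - intros m _. rewrite !ind_xs.
    destruct (le_dec k m), (le_dec (S k) m), (Nat.eq_dec m k); try ring; lia.
Qed.

End Cut.
Lemma Cnorm2_scal r a : Cnorm2 (Cscal r a) = r * r * Cnorm2 a.
Proof. cunf; simpl; ring. Qed.

Lemma Cnorm2_add2 p q : Cnorm2 (Cadd p q) <= 2 * Cnorm2 p + 2 * Cnorm2 q.
Proof. destruct p as [p1 p2], q as [q1 q2]; cunf; simpl.
  assert (P1 : 0 <= (p1 - q1) * (p1 - q1)) by apply Rle_0_sqr.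
  assert (P2 : 0 <= (p2 - q2) * (p2 - q2)) by apply Rle_0_sqr.
  assert (E : 2 * (p1 * p1 + p2 * p2) + 2 * (q1 * q1 + q2 * q2) - ((p1 + q1) * (p1 + q1) + (p2 + q2) * (p2 + q2))
     = (p1 - q1) * (p1 - q1) + (p2 - q2) * (p2 - q2)) by ring.
  lra. Qed.

Lemma Cnorm2_sub2 p q : Cnorm2 (Csub p q) <= 2 * Cnorm2 p + 2 * Cnorm2 q.
Proof.
  unfold Csub. replace (Cnorm2 q) with (Cnorm2 (Copp q)) by (cunf; simpl; ring). apply Cnorm2_add2.
Qed.

Lemma sq_le_c r c : 0 <= r <= c -> r * r <= c * c.
Proof. intros. apply Rmult_le_compat; lra. Qed.

Section Ecomm.
Variables (u : V -> Defs.C) (ph : V -> R) (d : nat -> R).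
Hypothesis Hpar : forall x, (forall k, x <> xs k) -> ph (parent x) = ph x.
Hypothesis Hstep : forall k, ph (xs k) - ph (xs (S k)) = d k.

Definition Ecom (x : V) : Defs.C :=
  Csub (jac (fun y => Cscal (ph y) (u y)) x) (Cscal (ph x) (jac u x)).

Lemma E_formula x : Ecom x = Cadd (Cscal (lam x * (ph (parent x) - ph x)) (u (parent x)))
   (csum (children x) (fun y => Cscal (lam y * (ph y - ph x)) (u y))).
Proof.
  unfold Ecom, jacobi.
  assert (Hc : csum (children x) (fun y => Cscal (lam y * (ph y - ph x)) (u y)) =
     Csub (csum (children x) (fun y => Cscal (lam y) (Cscal (ph y) (u y))))
          (Cscal (ph x) (csum (children x) (fun y => Cscal (lam y) (u y))))).
  { rewrite <- csum_scal, <- csum_sub. apply csum_ext; intros; ceq. }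
  rewrite Hc. ceq.
Qed.

Lemma child_off x y : (forall k, x <> xs k) -> In y (children x) -> forall k, y <> xs k.
Proof. intros Hx Hy k E. apply Hch in Hy. subst. apply (Hx (S k)). auto. Qed.

Lemma E_off x : (forall k, x <> xs k) -> Ecom x = C0.
Proof.
  intros Hx. rewrite E_formula, Hpar by auto. rewrite csum_zero. ceq.
  intros y Hy. pose proof (child_off x y Hx Hy) as Hy'. apply Hch in Hy. subst x.
  rewrite (Hpar y Hy'). ceq.
Qed.

Lemma E_xs0 : Ecom (xs 0) = Cscal (lam (xs 0) * - d 0) (u (xs 1)).
Proof.
  rewrite E_formula, Hxpath. rewrite csum_zero.
  - rewrite <- (Hstep 0). apply C_eq; cunf; simpl; ring.
  - intros y Hy. assert (Hy' : forall k, y <> xs k).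
    { intros k E. apply Hch in Hy. subst. rewrite Hxpath in Hy. apply xs_inj in Hy. lia. }
    apply Hch in Hy. rewrite <- Hy, (Hpar y Hy'). ceq.
Qed.

Lemma E_xsS j : Ecom (xs (S j)) = Cadd (Cscal (lam (xs (S j)) * - d (S j)) (u (xs (S (S j)))))
    (Cscal (lam (xs j) * d j) (u (xs j))).
Proof.
  rewrite E_formula, Hxpath. rewrite (csum_single_in _ _ (xs j)); auto.
  - rewrite <- (Hstep (S j)), <- (Hstep j). ceq.
  - apply Hch. auto.
  - intros y Hy Hne. assert (Hy' : forall k, y <> xs k).
    { intros k E. apply Hch in Hy. subst. rewrite Hxpath in Hy. apply xs_inj in Hy.
      injection Hy; intro; subst; congruence. }
    apply Hch in Hy. rewrite <- Hy, (Hpar y Hy'). ceq.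
Qed.

Lemma E_bound k c : (forall m, 0 <= lam (xs m) * d m <= c) ->
  Cnorm2 (Ecom (xs k)) <= 2 * (c * c) * (Cnorm2 (u (xs (S k))) +
     match k with O => 0 | S j => Cnorm2 (u (xs j)) end).
Proof.
  intros Hd. pose proof (Cnorm2_nonneg (u (xs (S k)))).
  destruct k as [|j].
  - rewrite E_xs0, Cnorm2_scal.
    assert (R1 : (lam (xs 0) * - d 0) * (lam (xs 0) * - d 0) <= c * c).
    { replace ((lam (xs 0) * - d 0) * (lam (xs 0) * - d 0)) with ((lam (xs 0) * d 0) * (lam (xs 0) * d 0)) by ring.
      apply sq_le_c; auto. }
    assert (0 <= c * c) by (apply Rle_0_sqr).
    assert (lam (xs 0) * - d 0 * (lam (xs 0) * - d 0) * Cnorm2 (u (xs 1)) <= c * c * Cnorm2 (u (xs 1)))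
      by (apply Rmult_le_compat_r; auto).
    nra.
  - rewrite E_xsS. eapply Rle_trans; [apply Cnorm2_add2|]. rewrite !Cnorm2_scal.
    pose proof (Cnorm2_nonneg (u (xs j))).
    assert (R1 : (lam (xs (S j)) * - d (S j)) * (lam (xs (S j)) * - d (S j)) <= c * c).
    { replace ((lam (xs (S j)) * - d (S j)) * (lam (xs (S j)) * - d (S j))) with
        ((lam (xs (S j)) * d (S j)) * (lam (xs (S j)) * d (S j))) by ring.
      apply sq_le_c; auto. }
    assert (R2 : (lam (xs j) * d j) * (lam (xs j) * d j) <= c * c) by (apply sq_le_c; auto).
    assert (lam (xs (S j)) * - d (S j) * (lam (xs (S j)) * - d (S j)) * Cnorm2 (u (xs (S (S j)))) <= c * c * Cnorm2 (u (xs (S (S j)))))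
      by (apply Rmult_le_compat_r; auto).
    assert (lam (xs j) * d j * (lam (xs j) * d j) * Cnorm2 (u (xs j)) <= c * c * Cnorm2 (u (xs j)))
      by (apply Rmult_le_compat_r; auto).
    lra.
Qed.

Lemma E_beyond K k : (forall m, (K < m)%nat -> d m = 0) -> (S K < k)%nat -> Ecom (xs k) = C0.
Proof.
  intros Hd Hk. destruct k as [|j]; [lia|]. rewrite E_xsS, !Hd by lia. ceq.
Qed.

Lemma E_sum (B c : R) K : (forall m, 0 <= lam (xs m) * d m <= c) -> (forall m, (K < m)%nat -> d m = 0) ->
  (forall n, sum_f_R0 (fun k => Cnorm2 (u (xs k))) n <= B) ->
  forall l, NoDup l -> rsum l (fun x => Cnorm2 (Ecom x)) <= 4 * (c * c) * B.
Proof.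
  intros Hd Hz HB l Nl.
  eapply Rle_trans. apply (path_supp _ (S (S K))); auto.
  - intros; apply Cnorm2_nonneg.
  - intros x Hx. destruct (classic (exists k, x = xs k)) as [[k Ek]|Hn].
    + subst x. rewrite (E_beyond K k); auto. apply Cnorm2_C0.
      destruct (le_lt_dec k (S (S K))); auto. exfalso; apply (Hx k); auto.
      destruct (le_lt_dec k (S (S K))); [exfalso; apply (Hx k); auto| lia].
    + rewrite E_off. apply Cnorm2_C0. intros k E; apply Hn; eauto.
  - set (P := fun k : nat => match k with O => 0 | S j => Cnorm2 (u (xs j)) end).
    apply Rle_trans with (sum_f_R0 (fun k => 2 * (c * c) * (Cnorm2 (u (xs (S k))) + P k)) (S (S K))).
    { apply sum_Rle. intros k _. apply E_bound; auto. }
    assert (E1 : sum_f_R0 (fun k => 2 * (c * c) * (Cnorm2 (u (xs (S k))) + P k)) (S (S K)) =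
       2 * (c * c) * (sum_f_R0 (fun k => Cnorm2 (u (xs (S k)))) (S (S K)) + sum_f_R0 P (S (S K)))).
    { rewrite <- plus_sum, scal_sum. apply sum_eq; intros; ring. }
    assert (E2 : sum_f_R0 P (S (S K)) = sum_f_R0 (fun k => Cnorm2 (u (xs k))) (S K)).
    { rewrite sum_shift. simpl P at 1. rewrite Rplus_0_l. apply sum_eq. intros; reflexivity. }
    assert (E3 : sum_f_R0 (fun k => Cnorm2 (u (xs (S k)))) (S (S K)) <= B).
    { pose proof (HB (S (S (S K)))). rewrite sum_shift in H. pose proof (Cnorm2_nonneg (u (xs 0))). lra. }
    pose proof (HB (S K)).
    assert (0 <= c * c) by apply Rle_0_sqr.
    rewrite E1, E2.
    assert (2 * (c * c) * (sum_f_R0 (fun k => Cnorm2 (u (xs (S k)))) (S (S K)) +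
        sum_f_R0 (fun k => Cnorm2 (u (xs k))) (S K)) <= 2 * (c * c) * (B + B)) by (apply Rmult_le_compat_l; lra).
    lra.
Qed.

End Ecomm.
Hypothesis Hdiv : cv_infty (fun N => sum_f_R0 (fun k => / lam (xs (S k))) N).

Lemma adj_closure u w : adjoint (closure Gr) u w -> closure Gr u w.
Proof.
  intros Ha. pose proof (adj_pointwise u w Ha) as Hpt. destruct Ha as [Hu [Hw _]].
  split; auto; split; auto. intros eps He.
  destruct (path_bound u Hu) as [B [B0 HB]].
  destruct (l2_bound u Hu) as [Bu [Bu0 HBu]]. destruct (l2_bound w Hw) as [Bw [Bw0 HBw]].
  set (h := fun x => Cnorm2 (u x) + Cnorm2 (w x)).
  destruct (tail h (Bu + Bw)) with (eps := eps / 4) as [M HM].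
  { intros x; unfold h; pose proof (Cnorm2_nonneg (u x)); pose proof (Cnorm2_nonneg (w x)); lra. }
  { intros l Nl. unfold h. rewrite rsum_plus. specialize (HBu l Nl). specialize (HBw l Nl). lra. }
  { lra. }
  set (R0 := 16 * (B + 1) / eps + 1).
  assert (HR0 : R0 * eps = 16 * (B + 1) + eps) by (unfold R0; field; lra).
  assert (HR1 : 1 <= R0).
  { unfold R0. assert (0 <= 16 * (B + 1) / eps) by (apply Rmult_le_pos; [lra| left; apply Rinv_0_lt_compat; lra]). lra. }
  destruct (Hdiv (ssum M + R0)) as [N0 HN0].
  set (N := Nat.max N0 (S M)).
  specialize (HN0 N (Nat.le_max_l _ _)). change (ssum M + R0 < ssum N) in HN0.
  assert (HMN : (M <= N)%nat) by (unfold N; lia).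
  set (T := ssum N - ssum M).
  assert (HT : R0 < T) by (unfold T; lra).
  set (c := / T).
  assert (Hc0 : 0 < c) by (unfold c; apply Rinv_0_lt_compat; lra).
  assert (HcR : c * R0 < 1).
  { unfold c. apply Rmult_lt_reg_r with T; [lra|]. rewrite Rmult_assoc, (Rmult_comm R0), <- Rmult_assoc, Rinv_l by lra. lra. }
  assert (Hc1 : c <= 1) by nra.
  assert (Htot : sum_f_R0 (dd M N c) (S N) = 1).
  { rewrite dd_total by auto. fold T. unfold c. field. lra. }
  set (ph := phi M N c).
  assert (Hph : forall x, 0 <= ph x <= 1) by (intros; apply phi_range; auto; lra).
  assert (Cut : forall x a, Cnorm2 a <= h x -> Cnorm2 (Cscal (1 - ph x) a) <= (1 - ind M x) * h x).
  { intros x a Ha. rewrite Cnorm2_scal. destruct (classic (desc M x)) as [D|D].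
    - unfold ph. rewrite phi_one, Htot, ind_one by auto. replace (1 - 1) with 0 by ring.
      pose proof (Cnorm2_nonneg a). lra.
    - rewrite ind_zero by auto. pose proof (Hph x). pose proof (Cnorm2_nonneg a).
      assert ((1 - ph x) * (1 - ph x) <= 1 * 1) by (apply sq_le_c; lra).
      assert ((1 - ph x) * (1 - ph x) * Cnorm2 a <= 1 * 1 * Cnorm2 a) by (apply Rmult_le_compat_r; lra).
      lra. }
  exists (fun x => Cscal (ph x) (u x)), (jac (fun x => Cscal (ph x) (u x))).
  split; [split|split].
  - exists (sub (xs (S N)) (S N)). intros x Hx. unfold ph. rewrite phi_zero. ceq.
    intro D; apply Hx; apply desc_in_sub; auto.
  - auto.
  - intros l Nl. apply Rle_trans with (rsum l (fun x => (1 - ind M x) * h x)).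
    + apply rsum_le. intros x _.
      replace (Csub (u x) (Cscal (ph x) (u x))) with (Cscal (1 - ph x) (u x)) by ceq.
      apply Cut. unfold h. pose proof (Cnorm2_nonneg (w x)). lra.
    + specialize (HM l Nl). lra.
  - intros l Nl.
    assert (Hpar : forall x, (forall k, x <> xs k) -> ph (parent x) = ph x) by (intros; apply phi_parent; auto).
    assert (Hstep : forall k, ph (xs k) - ph (xs (S k)) = dd M N c k) by (intros; apply phi_step).
    assert (ES := E_sum u ph (dd M N c) Hpar Hstep B c (S N)).
    specialize (ES ltac:(intros; apply dd_lam; lra) ltac:(intros; apply dd_big; auto) HB l Nl).
    apply Rle_trans with (rsum l (fun x => 2 * ((1 - ind M x) * h x) + 2 * Cnorm2 (Ecom u ph x))).
    + apply rsum_le. intros x _.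
      replace (Csub (w x) (jac (fun y => Cscal (ph y) (u y)) x)) with
        (Csub (Cscal (1 - ph x) (w x)) (Ecom u ph x)) by (unfold Ecom; rewrite Hpt; ceq).
      eapply Rle_trans; [apply Cnorm2_sub2|].
      assert (Cnorm2 (Cscal (1 - ph x) (w x)) <= (1 - ind M x) * h x).
      { apply Cut. unfold h. pose proof (Cnorm2_nonneg (u x)). lra. }
      lra.
    + rewrite rsum_plus, !rsum_scal. specialize (HM l Nl).
      assert (16 * B <= R0 * eps) by lra.
      assert (c * c * B <= c * B) by (apply Rmult_le_compat_r; [lra| nra]).
      assert (c * (16 * B) <= c * (R0 * eps)) by (apply Rmult_le_compat_l; lra).
      assert (c * R0 * eps < eps) by nra.
      lra.
Qed.

Theorem main_thm : ess_selfadjoint Gr.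
Proof.
  intros u w. split; [apply adj_closure| apply closure_sym].
Qed.

End Tree.

Theorem theorem6 (V : Type) (level : V -> nat) (parent : V -> V)
  (children : V -> list V) (lam beta : V -> R)
  (Hlev : forall x, level (parent x) = S (level x))
  (Hch : forall x y, In y (children x) <-> parent y = x)
  (Hnodup : forall x, NoDup (children x))
  (Hne : forall x, (1 <= level x)%nat -> children x <> nil)
  (Hconn : forall x y, clos_refl_trans V (tree_adj parent) x y)
  (Hlam : forall x, 0 < lam x)
  (xs : nat -> V)
  (Hxlev : forall n, level (xs n) = n)
  (Hxpath : forall n, parent (xs n) = xs (S n))
  (Hdiv : cv_infty (fun N => sum_f_R0 (fun k => / lam (xs (S k))) N)) :
  ess_selfadjoint (jacobi_graph parent children lam beta).
Proof.
  exact (main_thm V level parent children lam beta Hlev Hch Hnodup Hlam Hconn xs Hxlev Hxpath Hdiv).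
Qed.
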